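(* Let $n\ge0$, $r\in\mathcal{Y}_n$ and $\mathsf{R}\subseteq[n]$, regarded as a set of internal nodes of $r$ via the in-order labeling. Then $\lambda(\pi_{\mathsf{R}})\le r$ in the Tamari order if and only if $\mathsf{R}$ is admissible.
   Context: Permutations in one-line notation; $\mathrm{st}$ standardizes sequences of distinct integers. For $\mathsf{R}=\{R_1<\dots<R_p\}\subseteq[n]$ with complement $\{R^c_1<\dots<R^c_q\}$, $\pi_{\mathsf{R}}\in\mathfrak{S}_n$ is defined by $\pi_{\mathsf{R}}^{-1}=(R_1,..,R_p,R^c_1,..,R^c_q)$ in one-line notation. Trees: $\mathcal{Y}_n$ = rooted planar binary trees with $n$ internal nodes, $\mathcal{Y}_0=\{|\}$; $s\vee t$ = root with left subtree $s$, right subtree $t$. Tamari order: generated by replacing a subtree $(a\vee b)\vee c$ by the larger $a\vee(b\vee c)$. $\lambda(\mathrm{id}_0)=|$, $\lambda(\sigma)=\lambda(\mathrm{st}(\sigma(1..j-1)))\vee\lambda(\mathrm{st}(\sigma(j+1..n)))$ where $j=\sigma^{-1}(n)$. In-order labeling of the internal nodes of $r\in\mathcal{Y}_n$ by $1,\dots,n$: if $r=s\vee t$ with $s\in\mathcal{Y}_{j-1}$, the root gets label $j$, nodes of $s$ keep their labels in $s$, and nodes of $t$ get their labels in $t$ increased by $j$. A set $\mathsf{R}$ of internal nodes is admissible if for each $x\in\mathsf{R}$ the left child of $x$ (if internal) and all its internal descendants lie in $\mathsf{R}$. *)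

(* Defs.v *)
From mathcomp Require Import all_boot.
From Stdlib Require Import Relations.
Set Implicit Arguments. Unset Strict Implicit. Unset Printing Implicit Defensive.

(* Rooted planar binary trees; [leaf] is the tree | with no internal node,
   [node s t] is s \/ t. *)
Inductive tree : Type := leaf | node of tree & tree.

(* number of internal nodes; Y_n = trees with tnodes = n *)
Fixpoint tnodes (t : tree) : nat :=
  if t is node s u then (tnodes s + tnodes u).+1 else 0.

Inductive tamari_step : tree -> tree -> Prop :=
| ts_rot a b c : tamari_step (node (node a b) c) (node a (node b c))
| ts_left s s' u : tamari_step s s' -> tamari_step (node s u) (node s' u)
| ts_right s u u' : tamari_step u u' -> tamari_step (node s u) (node s u').

Definition tamari_le : tree -> tree -> Prop := clos_refl_trans tree tamari_step.

(* standardization of a sequence of distinct integers to values 1..k *)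
Definition st (s : seq nat) : seq nat :=
  [seq count (fun y => y <= x) s | x <- s].

(* lambda on (one-line notations of) permutations of {1..k}:
   lambda(sigma) = lambda(st(sigma(1..j-1))) \/ lambda(st(sigma(j+1..k)))
   where j = sigma^{-1}(k).  Fuel = length. *)
Fixpoint lambda_rec (fuel : nat) (s : seq nat) : tree :=
  match fuel with
  | 0 => leaf
  | f.+1 =>
    if s is [::] then leaf else
    let j := index (size s) s in
    node (lambda_rec f (st (take j s))) (lambda_rec f (st (drop j.+1 s)))
  end.

Definition lambda (s : seq nat) : tree := lambda_rec (size s) s.

(* pi_R in S_n, in one-line notation, for R a subset of [n]:
   pi_R^{-1} = (R_1,..,R_p,R^c_1,..,R^c_q), so pi_R(i) = position of i
   in that word (1-based). *)
Definition piR (n : nat) (R : seq nat) : seq nat :=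
  let w := [seq i <- iota 1 n | i \in R] ++ [seq i <- iota 1 n | i \notin R] in
  [seq (index i w).+1 | i <- iota 1 n].

(* in-order labels of the internal nodes of t, shifted by off:
   for t = s \/ u with s in Y_{j-1}, the root gets off + j, nodes of s keep
   their labels (shifted by off), nodes of u are shifted by off + j. *)
Fixpoint labels (t : tree) (off : nat) : seq nat :=
  if t is node s u then
    let j := (tnodes s).+1 in
    labels s off ++ (off + j) :: labels u (off + j)
  else [::].

Fixpoint admissible_rec (t : tree) (off : nat) (R : seq nat) : bool :=
  if t is node s u then
    let j := (tnodes s).+1 in
    [&& ((off + j) \in R) ==> all (fun y => y \in R) (labels s off),
        admissible_rec s off R & admissible_rec u (off + j) R]
  else true.

Definition admissible (t : tree) (R : seq nat) : bool := admissible_rec t 0 R.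

(* Main.v *)
Require Import Defs.
From mathcomp Require Import all_boot zify.
From Stdlib Require Import Relations.
Set Implicit Arguments. Unset Strict Implicit. Unset Printing Implicit Defensive.

Fixpoint comb n := if n is k.+1 then node (comb k) leaf else leaf.
Fixpoint graft (t x : tree) := if t is node a b then node (graft a x) b else x.
Definition rg t := if t is node a b then node a (node b leaf) else node leaf leaf.

Lemma tl_refl t : tamari_le t t. Proof. exact: rt_refl. Qed.
Lemma tl_trans a b c : tamari_le a b -> tamari_le b c -> tamari_le a c.
Proof. exact: rt_trans. Qed.
Lemma tl_nodeL s s' u : tamari_le s s' -> tamari_le (node s u) (node s' u).
Proof.
elim=> [x y H|x|x y z _ H1 _ H2]; first by apply: rt_step; constructor.
- exact: rt_refl.
- exact: rt_trans H1 H2.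
Qed.
Lemma tl_nodeR s u u' : tamari_le u u' -> tamari_le (node s u) (node s u').
Proof.
elim=> [x y H|x|x y z _ H1 _ H2]; first by apply: rt_step; constructor.
- exact: rt_refl.
- exact: rt_trans H1 H2.
Qed.
Lemma tl_node s s' u u' : tamari_le s s' -> tamari_le u u' ->
  tamari_le (node s u) (node s' u').
Proof. move=> H1 H2; exact: (tl_trans (tl_nodeL u H1) (tl_nodeR s' H2)). Qed.

Lemma graft_le t A B : tamari_le (graft t (node A B)) (node A (graft t B)).
Proof.
elim: t => [|t1 IH1 t2 _] /=; first exact: tl_refl.
apply: tl_trans (tl_nodeL t2 IH1) _; apply: rt_step; constructor.
Qed.

Lemma graft_leaf t : graft t leaf = t.
Proof. by elim: t => //= a -> b _. Qed.

Lemma rg_graft G Y : G <> leaf -> rg (graft G Y) = graft (rg G) Y.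
Proof. by case: G. Qed.

Definition hasc (P : pred nat) n := ~~ all P (iota 1 n).

Fixpoint T (P : pred nat) n :=
  if n is k.+1 then (if P k.+1 && hasc P k then rg (T P k) else node (T P k) leaf)
  else leaf.

Lemma T_S (P : pred nat) n : T P n.+1 =
  if P n.+1 && hasc P n then rg (T P n) else node (T P n) leaf.
Proof. by []. Qed.

Lemma tnodes_rg t : tnodes (rg t) = (tnodes t).+1.
Proof. case: t => //= a b; lia. Qed.

Lemma tnodes_T P n : tnodes (T P n) = n.
Proof.
elim: n => //= n IH; case: ifP => _; rewrite ?tnodes_rg /= IH //; lia.
Qed.


Lemma all_iotaP (P : pred nat) a n :
  reflect (forall i, a <= i < a + n -> P i) (all P (iota a n)).
Proof.
apply: (iffP allP) => H i Hi; apply: H; by rewrite mem_iota in Hi *.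
Qed.

Lemma hasc_add (P : pred nat) a b :
  hasc P (a + b) = hasc P a || hasc (fun i => P (a + i)) b.
Proof.
rewrite /hasc iotaD all_cat negb_and; congr (_ || _).
by rewrite add1n -addn1 iotaDl all_map; congr (~~ all _ _); rewrite addn1.
Qed.

Lemma hascS (P : pred nat) d : hasc P d.+1 = hasc P d || ~~ P d.+1.
Proof. by rewrite -addn1 hasc_add /hasc /= addn1 andbT. Qed.

Lemma hasc0 (P : pred nat) : hasc P 0 = false. Proof. by []. Qed.

Lemma T_full (P : pred nat) n : (forall i, 0 < i <= n -> P i) -> T P n = comb n.
Proof.
elim: n => //= n IH H.
have -> : hasc P n = false.
  by apply/negbF/all_iotaP => i Hi; apply: H; lia.
rewrite andbF IH // => i Hi; apply: H; lia.
Qed.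

Lemma T_last (P : pred nat) m d : ~~ P m.+1 -> (forall i, m.+1 < i <= m.+1 + d -> P i) ->
  T P (m.+1 + d) = node (T P m) (comb d).
Proof.
move=> Hm; elim: d => [|d IH] H.
  by rewrite addn0 /= (negbTE Hm).
rewrite addnS T_S IH; last by move=> i Hi; apply: H; lia.
have -> : P (m.+1 + d).+1 by apply: H; lia.
have -> // : hasc P (m.+1 + d).
by rewrite hasc_add hascS Hm orbT.
Qed.

Lemma iota_split a b c : iota a (b + c).+1 = iota a b ++ (a + b) :: iota (a + b).+1 c.
Proof. by rewrite -addnS iotaD. Qed.

Lemma labels_iota t off : labels t off = iota off.+1 (tnodes t).
Proof.
elim: t off => // s IHs u IHu off.
rewrite [labels _ _]/= [tnodes _]/= iota_split IHs IHu addnS addSn //.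
Qed.

Fixpoint admP t off (P : pred nat) : bool :=
  if t is node s u then
    [&& P (off + (tnodes s).+1) ==> all P (iota off.+1 (tnodes s)),
        admP s off P & admP u (off + (tnodes s).+1) P]
  else true.

Lemma adm_eq t off R : admissible_rec t off R = admP t off (fun x => x \in R).
Proof. by elim: t off => //= s IHs u IHu off; rewrite IHs IHu labels_iota. Qed.

Lemma admP_shift t off c (P : pred nat) :
  admP t (c + off) P = admP t off (fun i => P (c + i)).
Proof.
elim: t off => //= s IHs u IHu off.
rewrite IHs -addnA IHu -addnS iotaDl all_map addnA; by [].
Qed.

Lemma tnodes_step t t' : tamari_step t t' -> tnodes t = tnodes t'.
Proof. elim=> //= *; lia. Qed.

Lemma admP_step t t' off (P : pred nat) : tamari_step t t' -> admP t off P -> admP t' off P.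
Proof.
move=> H; elim: H off => [a b c|s s' u H IH|s u u' H IH] off /=.
- case/and3P=> H1 /and3P[H2 H3 H4] H5.
  rewrite H2 H3 H4 /=; apply/andP; split; last first. by move: H5; congr (admP c _ P); lia. apply/implyP=> Hp.
  have Hp2 : off + (tnodes a).+1 + (tnodes b).+1 = off + (tnodes a + tnodes b).+2 by lia.
  rewrite Hp2 in Hp; move/implyP: H1 => /(_ Hp) /andP[_ /all_iotaP H1].
  apply/all_iotaP => i Hi; apply: H1; lia.
- rewrite (tnodes_step H); case/and3P=> -> /IH -> ->; by [].
- case/and3P=> -> -> /IH ->; by [].
Qed.

Lemma admP_T (P : pred nat) n : admP (T P n) 0 P /\
  (hasc P n -> exists A B, T P n = node A B /\
       forall i, (tnodes A).+1 < i <= n -> P i).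
Proof.
elim: n => [|n [IH1 IH2]] //=.
case: ifP => [/andP[Pn Hn]|Hc].
  have [A [B [ET HAB]]] := IH2 Hn.
  have HT := tnodes_T P n; rewrite ET /= in HT.
  rewrite ET /=; split.
    rewrite ET /= in IH1; case/and3P: IH1 => -> -> /= HB.
    rewrite HB !andbT; apply/implyP => _; apply/all_iotaP => i Hi.
    apply: HAB; lia.
  move=> _; exists A, (node B leaf); split=> // i Hi.
  case: (ltnP i n.+1) => Hi2; first by apply: HAB; lia.
  by have -> : i = n.+1 by lia.
split.
  rewrite /= IH1 tnodes_T add0n !andbT; apply/implyP => Pn.
  move: Hc; rewrite Pn /= /hasc; by case: (all P (iota 1 n)).
move=> _; exists (T P n), leaf; split=> // i; rewrite tnodes_T; lia.
Qed.

Lemma caseB (P : pred nat) k d : P k.+1 -> (forall i, 0 < i <= k -> P i) ->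
  T P (k.+1 + d) = graft (T (fun i => P (k.+1 + i)) d) (comb k.+1).
Proof.
move=> Pk Hk; elim: d => [|d IH].
  rewrite addn0 T_full // => i Hi.
  case: (ltnP i k.+1) => H; first by apply: Hk; lia.
  by have -> : i = k.+1 by lia.
rewrite addnS T_S IH hasc_add.
have -> : hasc P k.+1 = false.
  apply/negbF/all_iotaP => i Hi.
  case: (ltnP i k.+1) => H; first by apply: Hk; lia.
  by have -> : i = k.+1 by lia.
rewrite /= -addnS.
case: ifP => [/andP[_ Hh]|_] //.
rewrite rg_graft // => E.
have := tnodes_T (fun i => P (k.+1 + i)) d; rewrite E /= => Ed.
by move: Hh; rewrite -Ed.
Qed.

Lemma caseA (P : pred nat) k d : ~~ P k.+1 -> exists G X,
  [/\ T P (k.+1 + d) = graft G (node (T P k) X),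
      T (fun i => P (k.+1 + i)) d = graft G X &
      (if hasc (fun i => P (k.+1 + i)) d then G <> leaf else G = leaf)].
Proof.
move=> Pk; elim: d => [|d [G [X [E1 E2 E3]]]].
  by exists leaf, leaf; rewrite addn0 /= (negbTE Pk).
set Q := fun i => P (k.+1 + i).
have Hc : hasc P (k.+1 + d) by rewrite hasc_add hascS Pk orbT.
rewrite addnS T_S Hc andbT E1 hascS -addnS T_S.
rewrite -/Q in E2 E3 *.
have -> : P (k.+1 + d.+1) = Q d.+1 by [].
case Qd: (Q d.+1) => /=.
  case Hq: (hasc Q d) E3 => E3 /=.
    exists (rg G), X; rewrite -rg_graft // E2 rg_graft //.
    apply: And3 => //; [exact: rg_graft | by case: (G)].
  rewrite E3 /= in E2 *; exists leaf, (node X leaf); split=> //.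
  by rewrite E2.
exists (node G leaf), X; rewrite orbT E2; by split.
Qed.

Lemma key (P : pred nat) k d : (P k.+1 -> forall i, 0 < i <= k -> P i) ->
  tamari_le (T P (k.+1 + d)) (node (T P k) (T (fun i => P (k.+1 + i)) d)).
Proof.
case Pk: (P k.+1) => H.
  have Hk := H isT.
  rewrite caseB // (T_full Hk).
  have := graft_le (T (fun i => P (k.+1 + i)) d) (comb k) leaf.
  by rewrite graft_leaf.
have [G [X [E1 E2 _]]] := caseA d (negbT Pk).
rewrite E1 E2; exact: graft_le.
Qed.

Lemma main_back r (P : pred nat) : admP r 0 P -> tamari_le (T P (tnodes r)) r.
Proof.
elim: r P => [|s IHs u IHu] P /=; first by move=> _; exact: tl_refl.
case/and3P=> H1 H2 H3.
rewrite -addSn; apply: tl_trans (key _ _) _.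
  move=> Pk i Hi; move: H1; rewrite add0n Pk /= => /all_iotaP; apply; lia.
apply: tl_node; first exact: IHs.
apply: IHu; by rewrite -admP_shift addn0.
Qed.

Lemma main_fwd r (P : pred nat) n : tamari_le (T P n) r -> admP r 0 P.
Proof.
move=> H.
suff: forall x y, tamari_le x y -> admP x 0 P -> admP y 0 P.
  by move/(_ _ _ H); apply; case: (admP_T P n).
move=> x y; elim=> [a b Hs|a|a b c _ Ha _ Hb] //.
  exact: admP_step.
by move=> /Ha /Hb.
Qed.

Definition cnt (P : pred nat) i := count P (iota 1 i).
Definition cntN (P : pred nat) i := cnt (fun j => ~~ P j) i.
Definition g (P : pred nat) n i := if P i then cnt P i else cnt P n + cntN P i.

Lemma iota1S i : iota 1 i.+1 = iota 1 i ++ [:: i.+1].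
Proof. by rewrite -[X in iota 1 X]addn1 iotaD add1n. Qed.

Lemma cntS (P : pred nat) i : cnt P i.+1 = cnt P i + P i.+1.
Proof. by rewrite /cnt iota1S count_cat /= addn0. Qed.

Lemma cnt0 (P : pred nat) : cnt P 0 = 0. Proof. by []. Qed.

Lemma cnt_sum (P : pred nat) i : cnt P i + cntN P i = i.
Proof.
elim: i => // i IH; rewrite /cntN !cntS -/(cntN P i).
case: (P i.+1) => /=; lia.
Qed.

Lemma cnt_le (P : pred nat) i j : i <= j -> cnt P i <= cnt P j.
Proof.
move=> H; rewrite -(subnKC H); elim: (j - i) => [|k IH]; first by rewrite addn0.
rewrite addnS cntS; lia.
Qed.

Lemma cnt_lt (P : pred nat) i j : i < j -> P j -> cnt P i < cnt P j.
Proof.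
case: j => // j Hij Pj; rewrite cntS Pj.
have := cnt_le P (i := i) (j := j) (ltac:(lia)); lia.
Qed.

Lemma cnt_run (P : pred nat) a b : (forall i, a < i <= a + b -> P i) ->
  cnt P (a + b) = cnt P a + b.
Proof.
elim: b => [|b IH] H; first by rewrite !addn0.
rewrite addnS cntS IH; last by move=> i Hi; apply: H; lia.
have -> : P (a + b).+1 by apply: H; lia.
by rewrite addnS addn1.
Qed.

Lemma cnt_run0 (P : pred nat) a b : (forall i, a < i <= a + b -> ~~ P i) ->
  cnt P (a + b) = cnt P a.
Proof.
elim: b => [|b IH] H; first by rewrite !addn0.
rewrite addnS cntS IH; last by move=> i Hi; apply: H; lia.
have -> : P (a + b).+1 = false by apply/negbTE/H; lia.
by rewrite addn0.
Qed.

Lemma idx_filter (Q : pred nat) n i : 0 < i <= n -> Q i ->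
  (index i (filter Q (iota 1 n))).+1 = count Q (iota 1 i).
Proof.
move=> Hi Qi.
have E : n = i.-1 + (n - i).+1 by lia.
have E2 : i = i.-1.+1 by lia.
rewrite E iotaD filter_cat index_cat mem_filter mem_iota Qi /=.
have -> : (1 + i.-1) = i by lia.
rewrite ltnn andbF /= Qi /= eqxx size_filter addn0.
by rewrite [in RHS]E2 iota1S count_cat /= -E2 Qi addn0 addn1.
Qed.

Lemma piR_eq n R : piR n R = map (g (fun x => x \in R) n) (iota 1 n).
Proof.
rewrite /piR; apply/eq_in_map => i; rewrite mem_iota => Hi.
rewrite index_cat mem_filter mem_iota Hi andbT /g.
case: ifP => HR.
  by rewrite idx_filter // ?HR //; lia.
rewrite size_filter -addnS idx_filter ?HR //; lia.
Qed.

Lemma cnt_le_iota k x : count (fun y => y <= x) (iota 1 k) = minn x k.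
Proof.
elim: k => [|k IH]; first by rewrite minn0.
rewrite iota1S count_cat IH /=; case: (leqP k.+1 x) => /= H; lia.
Qed.

Lemma st_id s : uniq s -> (forall x, x \in s -> 0 < x <= size s) -> st s = s.
Proof.
move=> Hu Hr.
have [_ Heq] := @uniq_min_size _ s (iota 1 (size s)) Hu
  (fun x Hx => (ltac:(rewrite mem_iota; have := Hr x Hx; lia)))
  (ltac:(by rewrite size_iota)).
have Hp : perm_eq s (iota 1 (size s)) := uniq_perm Hu (iota_uniq _ _) Heq.
rewrite /st -[RHS]map_id; apply/eq_in_map => x Hx /=.
rewrite (permP Hp (fun y => y <= x)) cnt_le_iota; have := Hr x Hx; lia.
Qed.

Lemma st_mono (h : nat -> nat) s : {mono h : x y / x <= y} -> st (map h s) = st s.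
Proof.
move=> Hm; rewrite /st -map_comp; apply: eq_map => x /=.
by rewrite count_map; apply: eq_count => y /=; rewrite Hm.
Qed.

Lemma g_range (P : pred nat) n i : 0 < i <= n -> 0 < g P n i <= n.
Proof.
move=> Hi; have Hs := cnt_sum P n; rewrite /g; case: ifP => Pi.
  have := cnt_lt (i := 0) (j := i) ltac:(lia) Pi; have := cnt_le P (i := i) (j := n) ltac:(lia).
  rewrite cnt0; lia.
have := cnt_lt (P := fun j => ~~ P j) (i := 0) (j := i) ltac:(lia) (negbT Pi).
have := cnt_le (fun j => ~~ P j) (i := i) (j := n) ltac:(lia).
rewrite /cntN cnt0 in Hs *; lia.
Qed.

Lemma g_inj (P : pred nat) n : {in iota 1 n &, injective (g P n)}.
Proof.
move=> i j; rewrite !mem_iota => Hi Hj.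
have Hs := cnt_sum P n; rewrite /cntN in Hs.
suff H : forall i j, 1 <= i < 1 + n -> 1 <= j < 1 + n -> i < j -> g P n i <> g P n j.
  move=> E; case: (ltngtP i j) => // H1; [case: (H i j Hi Hj H1 E) | case: (H j i Hj Hi H1 (esym E))].
move=> {Hi Hj} {}i {}j Hi' Hj' Hij; rewrite /g /cntN.
have Ci := cnt_le P (i := i) (j := n) ltac:(lia).
have Cj := cnt_le P (i := j) (j := n) ltac:(lia).
have Ni := cnt_le (fun j => ~~ P j) (i := i) (j := n) ltac:(lia).
have Nj := cnt_le (fun j => ~~ P j) (i := j) (j := n) ltac:(lia).
case: ifP => Pi; case: ifP => Pj.
- have := cnt_lt Hij Pj; lia.
- have := cnt_lt (P := fun j => ~~ P j) (i := 0) (j := j) ltac:(lia) (negbT Pj); rewrite cnt0; lia.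
- have := cnt_lt (P := fun j => ~~ P j) (i := 0) (j := i) ltac:(lia) (negbT Pi); rewrite cnt0; lia.
- have := cnt_lt (P := fun j => ~~ P j) Hij (negbT Pj); lia.
Qed.

Lemma pi_st (P : pred nat) n : st (map (g P n) (iota 1 n)) = map (g P n) (iota 1 n).
Proof.
apply: st_id; first by rewrite map_inj_in_uniq ?iota_uniq //; exact: g_inj.
move=> x /mapP[i]; rewrite mem_iota size_map size_iota => Hi ->; apply: g_range; lia.
Qed.

Lemma lamS f s : s != [::] -> lambda_rec f.+1 s =
  node (lambda_rec f (st (take (index (size s) s) s)))
       (lambda_rec f (st (drop (index (size s) s).+1 s))).
Proof. by case: s. Qed.

Lemma st_iota k : st (iota 1 k) = iota 1 k.
Proof.
apply: st_id; first exact: iota_uniq.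
move=> x; rewrite mem_iota size_iota; lia.
Qed.

Lemma lam_nil f : lambda_rec f [::] = leaf. Proof. by case: f. Qed.

Lemma lam_iota f k : k <= f -> lambda_rec f (iota 1 k) = comb k.
Proof.
elim: f k => [|f IH] [|k] Hk //.
rewrite lamS; last by rewrite iota1S; case: (iota 1 k).
rewrite size_iota iota1S index_cat mem_iota ifF; last by lia.
have -> : index k.+1 [:: k.+1] = 0 by rewrite /= eqxx.
rewrite size_iota addn0 take_size_cat ?size_iota // drop_oversize; last first.
  by rewrite size_cat size_iota addn1.
by rewrite st_iota IH // lam_nil.
Qed.

Lemma last_compl (P : pred nat) n : hasc P n ->
  exists m d, [/\ n = m.+1 + d, ~~ P m.+1 & forall i, m.+1 < i <= n -> P i].
Proof.
elim: n => [|n IH] //; rewrite hascS.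
case: (boolP (P n.+1)) => Pn /=; last first.
  by move=> _; exists n, 0; split=> // [|i Hi]; [lia | lia].
rewrite orbF => /IH [m [d [E Hm H]]]; exists m, d.+1; split=> //; first lia.
move=> i Hi; case: (ltnP i n.+1) => Hi2; first by apply: H; lia.
by have -> : i = n.+1 by lia.
Qed.

Lemma lam_piR (P : pred nat) f n : n <= f ->
  lambda_rec f (map (g P n) (iota 1 n)) = T P n.
Proof.
elim: f n => [|f IH] n Hn; first by have -> : n = 0 by lia.
case: (boolP (hasc P n)) => Hh; last first.
  have Hall : forall i, 0 < i <= n -> P i.
    move: Hh; rewrite negbK => /all_iotaP H i Hi; apply: H; lia.
  rewrite T_full //.
  have -> : map (g P n) (iota 1 n) = iota 1 n.
    rewrite -[RHS]map_id; apply/eq_in_map => i; rewrite mem_iota => Hi /=.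
    rewrite /g Hall; last lia.
    by rewrite -[i]add0n cnt_run // => j Hj; apply: Hall; lia.
  exact: lam_iota.
have [m [d [En Hm H]]] := last_compl Hh; subst n.
rewrite T_last //.
have Hcm : cnt P m.+1 = cnt P m by rewrite cntS (negbTE Hm) addn0.
have Hcn : cnt P (m.+1 + d) = cnt P m + d by rewrite cnt_run // Hcm.
have HNm : cntN P m.+1 = (cntN P m).+1 by rewrite /cntN cntS Hm addn1.
have HNn : cntN P (m.+1 + d) = (cntN P m).+1.
  by rewrite /cntN cnt_run0 -/(cntN P m.+1) ?HNm // => i Hi; rewrite negbK; apply: H.
have Hsm := cnt_sum P m.
set A := map (g P (m.+1 + d)) (iota 1 m).
set B := map (addn (cnt P m)) (iota 1 d).
have Es : map (g P (m.+1 + d)) (iota 1 (m.+1 + d)) = A ++ (m.+1 + d) :: B.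
  rewrite addSn iota_split map_cat /=; congr (_ ++ _ :: _).
    by rewrite /g add1n (negbTE Hm) Hcn HNm; lia.
  rewrite (_ : iota _ d = map (addn m.+1) (iota 1 d)); last by rewrite -iotaDl; congr iota; lia.
  rewrite -map_comp; apply/eq_in_map => j; rewrite mem_iota => Hj /=.
  idtac.
  rewrite /g H; last lia.
  rewrite cnt_run ?Hcm //; move=> i Hi; apply: H; lia.
have HA : size A = m by rewrite size_map size_iota.
have HnA : (m.+1 + d) \in A = false.
  apply/negbTE/mapP => [[i]]; rewrite mem_iota => Hi; rewrite /g.
  case: ifP => Pi.
    have := cnt_le P (i := i) (j := m) ltac:(lia); lia.
  have := cnt_le (fun j => ~~ P j) (i := i) (j := m) ltac:(lia); rewrite -/(cntN P i) -/(cntN P m).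
  lia.
rewrite Es lamS; last by case: (A).
have -> : size (A ++ m.+1 + d :: B) = m.+1 + d.
  by rewrite size_cat /= HA /B size_map size_iota; lia.
rewrite index_cat HnA /= eqxx HA addn0 take_size_cat // drop_cat HA.
have -> : (m.+1 < m) = false by lia.
rewrite subSnn /= drop0.
congr node.
  have -> : A = map (fun v => if v <= cnt P m then v else v + d) (map (g P m) (iota 1 m)).
    rewrite /A -map_comp; apply/eq_in_map => i; rewrite mem_iota => Hi /=.
    rewrite /g; case: ifP => Pi.
      by have := cnt_le P (i := i) (j := m) ltac:(lia); move=> ->.
    have := cnt_lt (P := fun j => ~~ P j) (i := 0) (j := i) ltac:(lia) (negbT Pi).
    rewrite cnt0 -/(cntN P i) => Hpos.
    rewrite ifF; last lia.
    rewrite Hcn; lia.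
  rewrite st_mono; first by rewrite pi_st IH //; lia.
  move=> x y /=; case: ifP; case: ifP; lia.
rewrite /B st_mono; last by move=> x y; rewrite leq_add2l.
by rewrite st_iota lam_iota //; lia.
Qed.

Lemma lambda_piR n R : lambda (piR n R) = T (fun x => x \in R) n.
Proof.
rewrite /lambda piR_eq size_map size_iota; exact: lam_piR.
Qed.

Theorem lemma8p8 (n : nat) (r : tree) (R : seq nat) :
  tnodes r = n ->
  (forall x, x \in R -> 0 < x <= n) ->
  (tamari_le (lambda (piR n R)) r <-> admissible r R).
Proof.
move=> Hn _; rewrite lambda_piR /admissible adm_eq; split.
  exact: main_fwd.
by move=> H; rewrite -Hn; exact: main_back.
Qed.
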